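(* Let $\Gamma$ be a finite constraint language, $\mathbf{I}$ a CSP instance with incidence graph $G$, and $q,k\in\mathbb{N}$. If $G$ has no $(q,k+1)$-separation, then $\mathbf{I}$ is $(q,k)$-nice.
   Context: A CSP instance is a finite set of constraints $(S,R)$ ($S$ a sequence of variables, $R$ a relation over a finite domain $\mathcal{D}$); its incidence graph $G$ is the bipartite graph on variables and constraints with $x\sim C$ iff $x$ in the scope of $C$. A $(q,k)$-separation of $G$ is a partition $(A,S,B)$ of $V(G)$ with $S$ consisting of variable vertices, $N(A),N(B)\subseteq S$, $|S|\le k$, and $|A|,|B|\ge q$. For $\alpha:X\to\mathcal{D}$, $\mathbf{I}|_\alpha$ restricts each relation to tuples consistent with $\alpha$ and removes positions of variables in $X$; $X$ is a strong backdoor into $\mathrm{CSP}(\Gamma)$ if every $\mathbf{I}|_\alpha$ uses only relations from $\Gamma$. $\mathbf{Torso}_G(X)$ is the graph on $X$ with $x_1x_2$ an edge iff adjacent in $G$ or both adjacent to a common component of $G-X$; the width of $X$ is $\mathrm{tw}(\mathbf{Torso}_G(X))$. $\mathbf{I}$ is $(\beta,k)$-nice if $\mathrm{tw}(G)\le\beta+k$, or if whenever $\mathbf{I}$ has a strong backdoor into $\mathrm{CSP}(\Gamma)$ of width at most $k$, it has one, $X$, of width at most $k$ such that $G-X$ has exactly one connected component $C$ with at least $\beta+1$ vertices and $|V(G)\setminus N[C]|\le\beta$. *)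

(* Defs.v *)
From mathcomp Require Import all_boot.

Set Implicit Arguments.
Unset Strict Implicit.
Unset Printing Implicit Defensive.

(* Finite (simple, undirected) graphs given by a vertex set W : {set T} *)
(* of a finType T and a symmetric edge relation e : rel T; only edges  *)
(* between vertices of W matter.                                       *)
Section Graphs.
Variable T : finType.

Definition restr (e : rel T) (U : {set T}) : rel T :=
  fun x y => [&& x \in U, y \in U & e x y].

Definition is_component (e : rel T) (U K : {set T}) : Prop :=
  exists2 x, x \in U & K = [set y in U | connect (restr e U) x y].

Definition nbh (e : rel T) (W A : {set T}) : {set T} :=
  [set y in W :\: A | [exists x in A, e x y]].

Definition cnbh (e : rel T) (W A : {set T}) : {set T} := A :|: nbh e W A.

Definition tedge n (par : 'I_n.+1 -> 'I_n.+1) : rel 'I_n.+1 :=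
  fun a b => ((0 < a) && (par a == b)) || ((0 < b) && (par b == a)).

(* tw((W, e)) <= w : there is a tree decomposition of width <= w.
   The tree has nodes 'I_n.+1 and edges {i, par i} for i > 0, where
   par i < i (every finite tree admits such a numbering, e.g. BFS). *)
Definition tw_le (e : rel T) (W : {set T}) (w : nat) : Prop :=
  exists n (par : 'I_n.+1 -> 'I_n.+1) (bag : 'I_n.+1 -> {set T}),
  [/\ (forall i : 'I_n.+1, 0 < i -> par i < i),
      (forall i, bag i \subset W) /\
      (forall v, v \in W -> exists i, v \in bag i),
      (forall u v, u \in W -> v \in W -> e u v ->
        exists i, (u \in bag i) && (v \in bag i)),
      (forall v i j, v \in bag i -> v \in bag j ->
        connect (fun a b => [&& tedge par a b, v \in bag a & v \in bag b]) i j)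
    & forall i, #|bag i| <= w.+1].

Definition torso (e : rel T) (W X : {set T}) : rel T :=
  fun x1 x2 =>
    (x1 != x2) &&
    (e x1 x2 ||
     [exists z1 in W :\: X, exists z2 in W :\: X,
        [&& connect (restr e (W :\: X)) z1 z2, e x1 z1 & e x2 z2]]).

End Graphs.

Definition relation (D : finType) := {r : nat & {set r.-tuple D}}.

Definition language (D : finType) := seq (relation D).

(* A CSP instance over variables V and domain D: a finite set of
   constraints, indexed by a finType C of constraint names; constraint c
   is (scope c, crel c).  Distinct names denote distinct constraints. *)
Record instance (V D : finType) := Instance {
  cons_t :> finType;
  arity : cons_t -> nat;
  scope : forall c : cons_t, (arity c).-tuple V;
  crel : forall c : cons_t, {set (arity c).-tuple D};
  cons_inj : injective (fun c : cons_t =>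
     existT (fun r => (r.-tuple V * {set r.-tuple D})%type) (arity c)
            (scope c, crel c))
}.

Section CSP.
Variables (V D : finType) (I : instance V D).

(* vertices of the incidence graph: variables (inl) and constraints (inr) *)
Local Notation vtx := (V + cons_t I)%type.

Definition vars : {set V} := [set x | [exists c : I, x \in scope c]].

Definition inc_vertices : {set vtx} :=
  [set u : vtx | match u with inl x => x \in vars | inr _ => true end].

Definition inc_edge : rel vtx := fun u v =>
  match u, v with
  | inl x, inr c => x \in scope c
  | inr c, inl x => x \in scope c
  | _, _ => false
  end.

Definition var_vertices : {set vtx} := [set inl x | x in vars].

Definition separation (q k : nat) (A S B : {set vtx}) : Prop :=
  [/\ A :|: S :|: B = inc_vertices,
      [&& [disjoint A & S], [disjoint A & B] & [disjoint S & B]],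
      S \subset var_vertices,
      (nbh inc_edge inc_vertices A \subset S) &&
      (nbh inc_edge inc_vertices B \subset S) /\
      #|S| <= k
    & q <= #|A| /\ q <= #|B|].

Definition has_separation (q k : nat) : Prop :=
  exists A S B, separation q k A S B.

(* The constraint of I|_alpha obtained from constraint c, for an
   assignment alpha : X -> D: positions of variables of X are removed and the relation
   is restricted to tuples consistent with alpha. *)
Local Unset Implicit Arguments.
Definition kept (X : {set V}) (c : I) : seq 'I_(arity c) :=
  [seq i <- enum 'I_(arity c) | tnth (scope c) i \notin X].

Definition consistent (X : {set V}) (alpha : {x : V | x \in X} -> D) (c : I)
  (t : (arity c).-tuple D) : bool :=
  [forall i : 'I_(arity c), forall y : {x : V | x \in X},
     (val y == tnth (scope c) i) ==> (tnth t i == alpha y)].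

Definition restr_rel (X : {set V}) (alpha : {x : V | x \in X} -> D) (c : I)
  : {set (size (kept X c)).-tuple D} :=
  [set u : (size (kept X c)).-tuple D |
     [exists t in crel c, consistent X alpha c t &&
        (val u == [seq tnth t i | i <- kept X c])]].

Definition restr_relation (X : {set V}) (alpha : {x : V | x \in X} -> D) (c : I)
  : relation D :=
  existT (fun r => {set r.-tuple D}) (size (kept X c)) (restr_rel X alpha c).

Definition uses_only (Gamma : language D) (X : {set V}) (alpha : {x : V | x \in X} -> D) :=
  forall c : I, restr_relation X alpha c \in Gamma.

Definition strong_backdoor (Gamma : language D) (X : {set V}) : Prop :=
  X \subset vars /\ forall alpha : {x : V | x \in X} -> D, uses_only Gamma X alpha.

Definition width_le (X : {set V}) (k : nat) : Prop :=
  let Xv := [set inl x | x in X] : {set vtx} in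
  tw_le (torso inc_edge inc_vertices Xv) Xv k.

Definition nice (Gamma : language D) (beta k : nat) : Prop :=
  tw_le inc_edge inc_vertices (beta + k) \/
  ((exists X, strong_backdoor Gamma X /\ width_le X k) ->
   exists X, [/\ strong_backdoor Gamma X, width_le X k &
     let Xv := [set inl x | x in X] : {set vtx} in
     exists C, [/\ is_component inc_edge (inc_vertices :\: Xv) C,
                   beta < #|C|,
                   (forall C', is_component inc_edge (inc_vertices :\: Xv) C' ->
                       beta < #|C'| -> C' = C)
                 & #|inc_vertices :\: cnbh inc_edge inc_vertices C| <= beta]]).

End CSP.

(* Main.v *)
Require Import Defs.
From mathcomp Require Import all_boot.
From Stdlib Require Import Classical.


Set Implicit Arguments.
Unset Strict Implicit.
Unset Printing Implicit Defensive.

Lemma connect_homo (T T' : finType) (e : rel T) (e' : rel T') (h : T -> T') :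
  (forall x y, e x y -> e' (h x) (h y)) ->
  forall x y, connect e x y -> connect e' (h x) (h y).
Proof.
move=> He x y /connectP [p Hp ->]; elim: p x Hp => [|z p IH] x //= /andP [exz pz].
exact: connect_trans (connect1 (He _ _ exz)) (IH _ pz).
Qed.

Lemma split_lshift m n (o : 'I_m) : split (lshift n o) = inl o.
Proof. exact: (unsplitK (inl o)). Qed.
Lemma split_rshift m n (o : 'I_n) : split (rshift m o) = inr o.
Proof. exact: (unsplitK (inr o)). Qed.
Lemma lr_cases m n (i : 'I_(m + n)) :
  (exists o, i = lshift n o) \/ (exists r, i = rshift m r).
Proof.
rewrite -[i]splitK; case: (split i) => [o|r]; [left|right]; eexists; reflexivity.
Qed.

Section Tree.
Variables (T : finType) (n : nat) (par : 'I_n.+1 -> 'I_n.+1).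
Hypothesis par_lt : forall i : 'I_n.+1, 0 < i -> par i < i.

Definition pp (i : 'I_n.+1) : 'I_n.+1 := if 0 < i then par i else i.
Definition desc (t i : 'I_n.+1) := exists m, iter m pp i = t.

Lemma pp_le i : pp i <= i.
Proof. by rewrite /pp; case: ifP => // /par_lt /ltnW. Qed.

Lemma iter_pp_le m i : iter m pp i <= i.
Proof. elim: m => //= m IH; exact: leq_trans (pp_le _) IH. Qed.

Lemma desc_le t i : desc t i -> t <= i.
Proof. by case=> m <-; apply: iter_pp_le. Qed.

Lemma desc_step t a b : tedge par a b -> desc t a ->
  desc t b \/ [/\ a = t, 0 < a & par a = b].
Proof.
rewrite /tedge => /orP [/andP [a0 /eqP pab] | /andP [b0 /eqP pba]] [m Hm].
- case: m Hm => [|m] Hm; first by right.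
  left; exists m; rewrite iterSr in Hm.
  by have <- : pp a = b by rewrite /pp a0.
- left; exists m.+1; rewrite iterSr.
  by have -> : pp b = a by rewrite /pp b0.
Qed.

Lemma connect_desc (Rel : rel 'I_n.+1) t i j :
  (forall a b, Rel a b -> tedge par a b) ->
  (forall b, Rel t b -> 0 < t -> par t = b -> False) ->
  connect Rel i j -> desc t i -> desc t j.
Proof.
move=> HR Ht /connectP [p Hp ->]; elim: p i Hp => [|z p IH] i //= /andP [Riz pz] di.
apply: IH pz _.
have [//|[eit it0 pit]] := desc_step (HR _ _ Riz) di.
by move: Riz it0 pit; rewrite eit => Riz it0 pit; case: (Ht _ Riz it0 pit).
Qed.

Lemma clique_bag (e' : rel T) (W' : {set T}) (bag : 'I_n.+1 -> {set T}) :
 (forall v, v \in W' -> exists i, v \in bag i) ->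
 (forall u v, u \in W' -> v \in W' -> e' u v -> exists i, (u \in bag i) && (v \in bag i)) ->
 (forall v i j, v \in bag i -> v \in bag j ->
    connect (fun a b => [&& tedge par a b, v \in bag a & v \in bag b]) i j) ->
 forall K : {set T}, K \subset W' ->
   (forall u v, u \in K -> v \in K -> u != v -> e' u v) -> exists i, K \subset bag i.
Proof.
move=> Hcov Hedge Hconn K KW Kcl.
case: (set_0Vmem K) => [->|[v0 v0K]]; first by exists ord0; rewrite sub0set.
pose istop v (t : 'I_n.+1) := (v \in bag t) && [forall j, (v \in bag j) ==> (t <= j)].
have Htop v : v \in W' -> exists t, istop v t.
  move=> /Hcov [i0 Hi0].
  case: (@arg_minnP _ i0 (fun j => v \in bag j) (fun j => val j) Hi0) => t Ht Hmin.
  exists t; rewrite /istop Ht; apply/forallP => j; apply/implyP => /Hmin //.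
have [t0 Ht0] := Htop v0 (subsetP KW _ v0K).
pose P := [pred p : T * 'I_n.+1 | (p.1 \in K) && istop p.1 p.2].
have P0 : P (v0, t0) by rewrite /= v0K.
case: (@arg_maxnP _ (v0,t0) P (fun p => val p.2) P0) => [[vs ts]] /=.
move=> /andP [vsK /andP [vsb /forallP vsmin]] Hmax.
exists ts; apply/subsetP => u uK.
case: (eqVneq u vs) => [->//|neq].
have [j /andP [uj vsj]] := Hedge u vs (subsetP KW _ uK) (subsetP KW _ vsK) (Kcl _ _ uK vsK neq).
have dj : desc ts j.
  apply: (connect_desc _ _ (Hconn vs ts j vsb vsj)); [by move=> a b /and3P [] | | by exists 0].
  move=> b /and3P [_ _ vsb'] ts0 pb.
  by move: (vsmin b); rewrite vsb' -pb /= leqNgt par_lt.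
case: (boolP (u \in bag ts)) => // nu.
have [tu /andP [tub /forallP tumin]] := Htop u (subsetP KW _ uK).
have tule : tu <= ts.
  by apply: (Hmax (u, tu)); rewrite /= uK /istop tub; apply/forallP.
have dtu : desc ts tu.
  apply: (connect_desc _ _ (Hconn u j tu uj tub)) dj; first by move=> a b /and3P[].
  by move=> b /and3P [_ ut _]; rewrite ut in nu.
have eq : tu = ts by apply/val_inj/eqP; rewrite eqn_leq tule desc_le.
by rewrite -eq tub in nu.
Qed.

End Tree.


Section Graph.
Variables (T : finType) (e : rel T) (W X : {set T}).
Hypotheses (esym : symmetric e) (eirr : irreflexive e) (XW : X \subset W).

Local Notation U := (W :\: X).
Local Notation R := (restr e (W :\: X)).

Lemma Rsym : symmetric R.
Proof. by move=> x y; rewrite /restr andbCA esym. Qed.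
Lemma Rcs : connect_sym R.
Proof. exact: sym_connect_sym Rsym. Qed.

Definition gcomp y := [set z in W :\: X | connect R y z].

Lemma connect_RU x y : x \in U -> connect R x y -> y \in U.
Proof.
move=> xU /connectP [p Hp ->]; elim: p x xU Hp => //= z p IH x xU /andP [/and3P [_ zU _] Hp].
exact: IH Hp.
Qed.

Lemma comp_U y : gcomp y \subset U.
Proof. by apply/subsetP => z; rewrite inE => /andP []. Qed.

Lemma nbh_comp_X y : nbh e W (gcomp y) \subset X.
Proof.
apply/subsetP => z; rewrite inE => /andP [/setDP [zW zC] /existsP [x /andP [xC exz]]].
case: (boolP (z \in X)) => // zX; exfalso; move/negP: zC; apply.
move: xC; rewrite inE => /andP [xU cyx].
have zU : z \in W :\: X by rewrite inE zX zW.
by rewrite inE zU (connect_trans cyx) // connect1 // /restr xU zU.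
Qed.

Lemma nbh_comp_clique y x1 x2 : x1 \in nbh e W (gcomp y) -> x2 \in nbh e W (gcomp y) ->
  x1 != x2 -> torso e W X x1 x2.
Proof.
rewrite /nbh !inE => /andP [_ /existsP [z1 /andP [z1C e1]]] /andP [_ /existsP [z2 /andP [z2C e2]]] ne.
rewrite /torso ne /=; apply/orP; right.
move: z1C z2C => /setIdP [z1U c1] /setIdP [z2U c2].
apply/existsP; exists z1; rewrite z1U /=; apply/existsP; exists z2; rewrite z2U /=.
by rewrite esym e1 esym e2 (connect_trans _ c2) // Rcs.
Qed.

Lemma comp_root v : v \in U ->
  [/\ root R v \in U, root R (root R v) = root R v & v \in gcomp (root R v)].
Proof.
move=> vU; split; first exact: connect_RU vU (connect_root _ v).
  by rewrite (root_root Rcs).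
by rewrite inE vU Rcs connect_root.
Qed.

Lemma comp_eq y1 y2 z : z \in gcomp y1 -> z \in gcomp y2 -> gcomp y1 = gcomp y2.
Proof.
rewrite !inE => /andP [_ c1] /andP [_ c2].
have c12 : connect R y1 y2 by rewrite (connect_trans c1) // Rcs.
by apply/setP => w; rewrite !inE (same_connect Rcs c12).
Qed.

Lemma nbh_comp_bag k : tw_le (torso e W X) X k -> forall y,
  exists2 i : nat, i <= k.+1 & #|nbh e W (gcomp y)| <= i.
Proof.
case=> n [par [bag [plt [bW bcov] bedge bconn bsz]]] y.
have [i Hi] := clique_bag plt bcov bedge bconn (nbh_comp_X y) (fun u v uK vK => nbh_comp_clique uK vK).
by exists #|bag i|; [exact: bsz | exact: subset_leq_card].
Qed.

Lemma tw_extend k q : tw_le (torso e W X) X k ->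
  (forall y, y \in U -> #|gcomp y| <= q) -> tw_le e W (q + k).
Proof.
case=> n [par [bag [plt [bW bcov] bedge bconn bsz]]] small.
have Ha y : exists i : 'I_n.+1, nbh e W (gcomp y) \subset bag i.
  have [i Hi] := clique_bag plt bcov bedge bconn (nbh_comp_X y) (fun u v uK vK => nbh_comp_clique uK vK).
  by exists i.
pose a y := @xchoose _ (fun i : 'I_n.+1 => nbh e W (gcomp y) \subset bag i) (Ha y).
have Ha' y : y \in U -> nbh e W (gcomp y) \subset bag (a y) := fun _ => xchooseP (Ha y).
pose N := #|T|.
pose par2 (i : 'I_(n.+1 + N)) : 'I_(n.+1 + N) :=
  match split i with inl o => lshift N (par o) | inr r => lshift N (a (enum_val r)) end.
pose act y := (y \in U) && (root R y == y).
pose bag2 (i : 'I_(n.+1 + N)) :=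
  match split i with inl o => bag o
  | inr r => if act (enum_val r) then gcomp (enum_val r) :|: bag (a (enum_val r)) else set0 end.
have bagL o : bag2 (lshift N o) = bag o by rewrite /bag2 split_lshift.
have leaf y : y \in U -> root R y = y ->
    bag2 (rshift n.+1 (enum_rank y)) = gcomp y :|: bag (a y).
  by move=> yU yy; rewrite /bag2 split_rshift enum_rankK /act yU yy eqxx.
have b2W i : bag2 i \subset W.
  case: (@lr_cases n.+1 N i) => [[o ->]|[r ->]]; first by rewrite bagL; exact: subset_trans (bW o) XW.
  rewrite /bag2 split_rshift; case: ifP => _; last by rewrite sub0set.
  rewrite subUset (subset_trans (bW _) XW) andbT.
  by apply: subset_trans (comp_U _) _; apply: subsetDl.
pose Rel2 v := (fun a b : 'I_(n.+1 + N) => [&& tedge par2 a b, v \in bag2 a & v \in bag2 b]).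
have Rel2cs v : connect_sym (Rel2 v).
  apply: sym_connect_sym => x y; rewrite /Rel2 /tedge [X in X && _]orbC.
  by case: (v \in bag2 x); case: (v \in bag2 y); rewrite ?andbF ?andbT.
exists (n + N); exists par2; exists bag2; split.
- move=> i; case: (@lr_cases n.+1 N i) => [[o ->]|[r ->]]; rewrite /par2 ?split_lshift ?split_rshift /=.
    exact: plt.
  by move=> _; apply: leq_trans (ltn_ord _) (leq_addr _ _).
- split; first exact: b2W.
  move=> v vW; case: (boolP (v \in X)) => vX.
    by have [o Ho] := bcov v vX; exists (lshift N o); rewrite bagL.
  have vU : v \in U by rewrite inE vX.
  have [rU rr vc] := comp_root vU.
  by exists (rshift n.+1 (enum_rank (root R v))); rewrite leaf // inE vc.
- move=> u v uW vW euv.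
  have Hx x z : x \in X -> z \in U -> e z x ->
      exists i, (x \in bag2 i) && (z \in bag2 i).
    move=> xX zU ezx; have [rU rr zc] := comp_root zU.
    exists (rshift n.+1 (enum_rank (root R z))); rewrite leaf // !in_setU zc orTb andbT.
    apply/orP; right; apply: (subsetP (Ha' _ rU)).
    rewrite /nbh inE; apply/andP; split.
      by rewrite inE (subsetP XW _ xX) andbT; apply/negP => /(subsetP (comp_U _)); rewrite inE xX.
    by apply/existsP; exists z; rewrite zc.
  case: (boolP (u \in X)) => uX; case: (boolP (v \in X)) => vX.
  + have tuv : torso e W X u v.
      rewrite /torso euv andbT; apply/eqP => uv; by rewrite uv eirr in euv.
    by have [o Ho] := bedge u v uX vX tuv; exists (lshift N o); rewrite bagL.
  + by apply: Hx => //; rewrite ?inE ?vX ?vW // esym.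
  + have uU : u \in U by rewrite inE uX uW.
    by have [i Hi] := Hx v u vX uU euv; exists i; rewrite andbC.
  + have uU : u \in U by rewrite inE uX.
    have vU : v \in U by rewrite inE vX.
    have [rU rr uc] := comp_root uU.
    have ruv : root R u = root R v.
      by apply/(rootP Rcs)/connect1; rewrite /restr uU vU.
    exists (rshift n.+1 (enum_rank (root R u))); rewrite leaf // !in_setU uc /=.
    by rewrite ruv; have [_ _ ->] := comp_root vU.
- move=> v i j vi vj.
  have vW : v \in W by apply: (subsetP (b2W i)).
  have HA i' : v \in bag2 i' -> v \in U -> i' = rshift n.+1 (enum_rank (root R v)).
    case: (@lr_cases n.+1 N i') => [[o ->]|[r ->]].
      by rewrite bagL => /(subsetP (bW o)) vX; rewrite inE vX.
    rewrite /bag2 split_rshift; case: ifP; last by rewrite inE.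
    move=> /andP [yU /eqP yy]; rewrite inE => /orP [vc|vb] vU; last first.
      by move: vU; rewrite inE (subsetP (bW _) _ vb).
    move: vc; rewrite inE => /andP [_ /(rootP Rcs) Hr].
    by rewrite -Hr yy enum_valK.
  have HB i' : v \in bag2 i' -> v \in X -> exists o, v \in bag o /\ connect (Rel2 v) i' (lshift N o).
    case: (@lr_cases n.+1 N i') => [[o ->]|[r ->]].
      by rewrite bagL => vo _; exists o; split.
    rewrite /bag2 split_rshift; case: ifP; last by rewrite inE.
    move=> /andP [yU yy]; rewrite inE => /orP [vc|vb] vX.
      by move: (subsetP (comp_U _) _ vc); rewrite inE vX.
    exists (a (enum_val r)); split => //; apply: connect1.
    rewrite /Rel2 bagL vb andbT /tedge /par2 split_rshift eqxx /=.
    rewrite /bag2 split_rshift; case: ifP => [_|]; last by rewrite /act yU yy.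
    by rewrite inE vb orbT.
  have HC o o' : connect (fun a b => [&& tedge par a b, v \in bag a & v \in bag b]) o o' ->
      connect (Rel2 v) (lshift N o) (lshift N o').
    apply: connect_homo => x y /and3P [txy vx vy].
    rewrite /Rel2 !bagL vx vy !andbT.
    move: txy; rewrite /tedge /par2 !split_lshift /=.
    by case/orP => /andP [x0 /eqP <-]; apply/orP; [left|right]; rewrite x0 eqxx.
  case: (boolP (v \in X)) => vX.
    have [o1 [vo1 c1]] := HB i vi vX.
    have [o2 [vo2 c2]] := HB j vj vX.
    apply: connect_trans c1 (connect_trans (HC _ _ (bconn v o1 o2 vo1 vo2)) _).
    by rewrite Rel2cs.
  have vU : v \in U by rewrite inE vX vW.
  by rewrite (HA i vi vU) (HA j vj vU).
- move=> i; case: (@lr_cases n.+1 N i) => [[o ->]|[r ->]].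
    by rewrite bagL; apply: leq_trans (bsz o) _; rewrite ltnS leq_addl.
  rewrite /bag2 split_rshift; case: ifP => [/andP [yU _]|]; last by rewrite cards0.
  rewrite cardsU; apply: leq_trans (leq_subr _ _) _.
  by rewrite -addnS leq_add // ?small ?bsz.
Qed.

End Graph.


Lemma disjP (T : finType) (A B : {set T}) :
  (forall x, x \in A -> x \in B -> False) -> [disjoint A & B].
Proof.
move=> H; rewrite disjoint_subset; apply/subsetP => x xA.
by rewrite inE; apply/negP => /(H x xA).
Qed.

Section Inst.
Variables (V D : finType) (I : instance V D).
Local Notation E := (@inc_edge V D I).

Lemma inc_sym : symmetric (@inc_edge V D I).
Proof. by move=> [x|c] [y|d]. Qed.
Lemma inc_irr : irreflexive (@inc_edge V D I).
Proof. by case. Qed.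

Lemma Xv_sub (X : {set V}) : X \subset vars I ->
  [set inl x | x in X] \subset (@inc_vertices V D I).
Proof.
move=> Xs; apply/subsetP => u /imsetP [x xX ->].
by rewrite inE (subsetP Xs).
Qed.

Lemma sep_of_comp (X : {set V}) q k y :
  let Xv := [set inl x | x in X] : {set V + I} in
  let W := @inc_vertices V D I in
  X \subset vars I -> tw_le (torso E W Xv) Xv k ->
  y \in W :\: Xv -> q < #|gcomp E W Xv y| ->
  q <= #|W :\: cnbh E W (gcomp E W Xv y)| ->
  has_separation I q k.+1.
Proof.
move=> Xv W Xs tw yU qA qB.
set A := gcomp E W Xv y.
set S := nbh E W A.
exists A, S, (W :\: cnbh E W A).
have AW : A \subset W by apply: subset_trans (comp_U _ _ _ _) (subsetDl _ _).
have SW : S \subset W by apply/subsetP => z; rewrite /S /nbh inE => /andP [/setDP []].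
have SA z : z \in S -> z \notin A by rewrite /S /nbh inE => /andP [/setDP []].
have SX : S \subset Xv := nbh_comp_X E W Xv y.
split.
- apply/setP => z; rewrite /cnbh !(in_setU, in_setD).
  case zA: (z \in A) => /=; first by rewrite (subsetP AW).
  by case zS: (z \in S) => /=; first by rewrite (subsetP SW).
- apply/and3P; split; apply: disjP => z.
  + by move=> zA /SA; rewrite zA.
  + by move=> zA; rewrite /cnbh !(in_setU, in_setD) zA.
  + by move=> zS; rewrite /cnbh !(in_setU, in_setD) zS orbT.
- apply: subset_trans SX _; exact: imsetS.
- split; last first.
    have [i ik Si] := nbh_comp_bag inc_sym tw y.
    exact: leq_trans Si ik.
  rewrite subxx /=; apply/subsetP => z; rewrite /nbh inE.
  move=> /andP [/setDP [zW zB] /existsP [x /andP [xB exz]]].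
  move: zB; rewrite /cnbh !(in_setU, in_setD) zW andbT negbK => /orP [zA|//].
  move: xB; rewrite /cnbh !(in_setU, in_setD) => /andP [/norP [xA xS] xW].
  exfalso; move/negP: xS; apply; rewrite /S /nbh inE.
  rewrite in_setD xA xW /=; apply/existsP; exists z; by rewrite zA inc_sym.
- by split; [exact: ltnW|].
Qed.

End Inst.

Unset Implicit Arguments.

Theorem lemma11 (V D : finType) (Gamma : language D) (I : instance V D)
  (q k : nat) :
  ~ has_separation I q k.+1 -> nice V D I Gamma q k.
Proof.
move=> nosep.
case: (classic (tw_le (@inc_edge V D I) (inc_vertices I) (q + k))) => [H|Htw]; [by left|right].
move=> [X [sb wd]]; exists X; split => //.
have Xs := sb.1.
move: wd; rewrite /width_le; cbv zeta => tw.
set Xv := [set inl x | x in X] : {set V + I}.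
set W := inc_vertices I.
set E := @inc_edge V D I.
case: (classic (exists y, y \in W :\: Xv /\ q < #|gcomp E W Xv y|)) => [[y [yU qy]]|nobig]; last first.
  exfalso; apply: Htw.
  apply: (tw_extend (@inc_sym V D I) (@inc_irr V D I) (Xv_sub Xs) tw) => y yU.
  rewrite leqNgt; apply/negP => qy; apply: nobig; exists y; by split.
exists (gcomp E W Xv y); split.
- by exists y.
- done.
- move=> C' [y' y'U ->] qC'.
  change (gcomp E W Xv y' = gcomp E W Xv y).
  case: (classic (exists z, z \in gcomp E W Xv y' /\ z \in gcomp E W Xv y)) => [[z [z1 z2]]|nz].
    exact: comp_eq (@inc_sym V D I) _ _ _ z1 z2.
  exfalso; apply: nosep; apply: (sep_of_comp Xs tw yU qy).
  apply: leq_trans (ltnW qC') (subset_leq_card _).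
  apply/subsetP => z zc'; rewrite /cnbh !(in_setU, in_setD).
  have zU := subsetP (comp_U _ _ _ _) _ zc'.
  move: (zU); rewrite in_setD => /andP [zX ->]; rewrite andbT.
  apply/norP; split; first by apply/negP => zc; apply: nz; exists z.
  by apply/negP => /(subsetP (nbh_comp_X _ _ _ _)); rewrite (negbTE zX).
- rewrite leqNgt; apply/negP => qB; apply: nosep.
  exact: (sep_of_comp Xs tw yU qy (ltnW qB)).
Qed.
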